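(* Assume the system is IFS$_m$, with a controller $\Psi$ of kind (2) whose closed loop satisfies $\|\phi(k,\sigma,x_0,\Psi)\|\le C\gamma^k\|x_0\|$ for all $x_0,\sigma,k$, where $C>1$, $\gamma\in[0,1)$. Define $V:\mathbb{R}^n\to\mathbb{R}$ by $$V(x_0)=\inf_{\Psi'\in\mathcal{C}_m}\ \sup_{\sigma\in\Sigma^\omega}\ \sum_{k=0}^{\infty}\|\phi(k,\sigma,x_0,\Psi')\|,$$ where $\mathcal{C}_m$ is the set of all functions $\mathcal{H}_-\to\mathbb{R}^m$. Then $\|x_0\|\le V(x_0)\le \frac{C}{1-\gamma}\|x_0\|$ for all $x_0\in\mathbb{R}^n$, and $V$ is a norm on $\mathbb{R}^n$ (positive definite, absolutely homogeneous of degree 1, i.e. $V(\lambda x)=|\lambda|V(x)$ for all $\lambda\in\mathbb{R}$, and subadditive); in particular $V$ is convex and continuous.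
   Context: Let $\Sigma$ be a finite nonempty set and $\{(A_i,B_i)\in\mathbb{R}^{n\times n}\times\mathbb{R}^{n\times m} : i\in\Sigma\}$. Consider $x(k+1)=A_{\sigma(k)}x(k)+B_{\sigma(k)}u(k)$, $k\in\mathbb{N}=\{0,1,\dots\}$, with arbitrary switching signal $\sigma:\mathbb{N}\to\Sigma$ (set of all such: $\Sigma^\omega$). $\|\cdot\|$ is the Euclidean norm. $\mathcal{H}_-$ is the set of all tuples $(x_k,\dots,x_0;\,i_{k-1},\dots,i_0)$ with $k\in\mathbb{N}$, $x_j\in\mathbb{R}^n$, $i_j\in\Sigma$ (mode string empty when $k=0$). For a function $\Psi:\mathcal{H}_-\to\mathbb{R}^m$ (a current-mode-independent controller with memory), $\phi(k,\sigma,x_0,\Psi)$ denotes the closed-loop trajectory defined by $x(0)=x_0$ and $x(k+1)=A_{\sigma(k)}x(k)+B_{\sigma(k)}\Psi(x(k),\dots,x(0);\,\sigma(k-1),\dots,\sigma(0))$. The system is IFS$_m$ if there exists such $\Psi$ and constants $M>0,\gamma\in[0,1)$ with $\|\phi(k,\sigma,x_0,\Psi)\|\le M\gamma^k\|x_0\|$ for all $x_0\in\mathbb{R}^n,\sigma\in\Sigma^\omega,k\in\mathbb{N}$. *)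

(* Defs.v *)
From HB Require Import structures.
From mathcomp Require Import all_boot all_order all_algebra.
From mathcomp Require Import all_classical all_reals all_analysis.
Set Implicit Arguments. Unset Strict Implicit. Unset Printing Implicit Defensive.
Import Order.TTheory GRing.Theory Num.Theory.
Import numFieldNormedType.Exports.
Local Open Scope classical_set_scope.
Local Open Scope ring_scope.

Section SwitchedDefs.
Variables (R : realType) (Sig : finType) (n m : nat).

Definition enorm (x : 'cV[R]_n) : R := Num.sqrt (\sum_(i < n) (x i 0) ^+ 2).

(* An element of H_- : (x_k,...,x_0 ; i_{k-1},...,i_0), stored time-indexed:
   the first function maps j (0 <= j <= k) to x_j, the second maps
   j (0 <= j < k) to i_j. *)
Definition history : Type :=
  {k : nat & (('I_k.+1 -> 'cV[R]_n) * ('I_k -> Sig))%type}.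

(* current-mode-independent controllers with memory: C_m = all maps H_- -> R^m *)
Definition controller : Type := history -> 'cV[R]_m.

Variables (A : Sig -> 'M[R]_n) (B : Sig -> 'M[R]_(n, m)).

Definition hist_of (sigma : nat -> Sig) (k : nat) (s : seq 'cV[R]_n) : history :=
  existT _ k ((fun j : 'I_k.+1 => nth 0 s (k - j)%N),
              (fun j : 'I_k => sigma (nat_of_ord j))).

(* trajs k = [x(k); x(k-1); ...; x(0)] of the closed loop *)
Fixpoint trajs (Psi : controller) (sigma : nat -> Sig) (x0 : 'cV[R]_n) (k : nat)
  : seq 'cV[R]_n :=
  match k with
  | 0 => [:: x0]
  | k'.+1 =>
      let s := trajs Psi sigma x0 k' in
      (A (sigma k') *m head 0 s + B (sigma k') *m Psi (hist_of sigma k' s)) :: s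
  end.

Definition phi (k : nat) (sigma : nat -> Sig) (x0 : 'cV[R]_n) (Psi : controller)
  : 'cV[R]_n := head 0 (trajs Psi sigma x0 k).

Definition cost (x0 : 'cV[R]_n) (Psi : controller) (sigma : nat -> Sig) : \bar R :=
  (\sum_(0 <= k <oo) (enorm (phi k sigma x0 Psi))%:E)%E.

Definition Vext (x0 : 'cV[R]_n) : \bar R :=
  ereal_inf (range (fun Psi : controller => ereal_sup (range (cost x0 Psi)))).

(* real-valued V (finite by the theorem) *)
Definition V (x0 : 'cV[R]_n) : R := fine (Vext x0).

End SwitchedDefs.

(* Main.v *)
Require Import Defs.
From HB Require Import structures.
From mathcomp Require Import all_boot all_order all_algebra.
From mathcomp Require Import all_classical all_reals all_analysis.
From mathcomp Require Import ring lra.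
Import Order.TTheory GRing.Theory Num.Theory.
Import numFieldNormedType.Exports.
Local Open Scope classical_set_scope.
Local Open Scope ring_scope.

Lemma cs_ineq (R : realType) (n : nat) (a b : 'I_n -> R) :
  (\sum_i a i * b i) ^+ 2 <= (\sum_i a i ^+ 2) * (\sum_i b i ^+ 2).
Proof.
set A := \sum_i a i ^+ 2; set Bs := \sum_i b i ^+ 2; set D := \sum_i a i * b i.
have B0 : 0 <= Bs by apply: sumr_ge0 => i _; exact: sqr_ge0.
have [Bz|Bp] := eqVneq Bs 0.
  have bz : forall i, b i = 0.
    move=> i; apply/eqP; rewrite -sqrf_eq0; apply/eqP.
    move/eqP: Bz; rewrite psumr_eq0; last by move=> j _; exact: sqr_ge0.
    by move/allP => /(_ i (mem_index_enum _)) /eqP.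
  rewrite /D big1 ?expr0n ?Bz ?mulr0 // => i _; by rewrite bz mulr0.
have Bpos : 0 < Bs by rewrite lt_def Bp B0.
have H : 0 <= \sum_i (Bs * a i - D * b i) ^+ 2 by apply: sumr_ge0 => i _; exact: sqr_ge0.
have E : \sum_i (Bs * a i - D * b i) ^+ 2 = Bs * (A * Bs - D ^+ 2).
  rewrite (eq_bigr (fun i => Bs ^+ 2 * a i ^+ 2 + (- (2 * Bs * D)) * (a i * b i) + D ^+ 2 * b i ^+ 2)); last by move=> i _; ring.
  rewrite !big_split /= -!mulr_sumr -/A -/Bs -/D; ring.
rewrite E in H.
by rewrite -subr_ge0 -(pmulr_rge0 _ Bpos).
Qed.

Lemma enorm_ge0 (R : realType) n (x : 'cV[R]_n) : 0 <= enorm x.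
Proof. exact: sqrtr_ge0. Qed.

Arguments enorm_ge0 {R n}.

Lemma enormZ (R : realType) n (l : R) (x : 'cV[R]_n) : enorm (l *: x) = `|l| * enorm x.
Proof.
rewrite /enorm (eq_bigr (fun i => l ^+ 2 * x i 0 ^+ 2)); last first.
  by move=> i _; rewrite mxE exprMn.
by rewrite -mulr_sumr sqrtrM ?sqr_ge0 // sqrtr_sqr.
Qed.

Arguments enormZ {R n}.

Lemma enorm0 (R : realType) n : enorm (0 : 'cV[R]_n) = 0.
Proof. by rewrite -(scale0r (0 : 'cV[R]_n)) enormZ normr0 mul0r. Qed.

Lemma enorm_gt0 (R : realType) n (x : 'cV[R]_n) : x != 0 -> 0 < enorm x.
Proof.
move=> xn0; rewrite /enorm sqrtr_gt0.
have /existsP[i /existsP[j xij]] : [exists i, [exists j, x i j != 0]].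
  apply: contraNT xn0 => /existsPn H; apply/eqP/matrixP => i j; rewrite mxE.
  by move/existsPn: (H i) => /(_ j); rewrite negbK => /eqP.
have j0 : j = 0 by apply: ord_inj; case: j {xij} => [[]].
subst j.
rewrite (bigD1 i) //= ltr_pwDl ?sqr_ge0 //.
  by rewrite lt_def sqr_ge0 sqrf_eq0 xij.
by apply: sumr_ge0 => k _; exact: sqr_ge0.
Qed.

Arguments enorm_gt0 {R n}.

Lemma enormD (R : realType) n (x y : 'cV[R]_n) : enorm (x + y) <= enorm x + enorm y.
Proof.
rewrite /enorm.
set a := (fun i : 'I_n => x i 0); set b := (fun i : 'I_n => y i 0).
rewrite (eq_bigr (fun i => a i ^+ 2 + (2 * (a i * b i)) + b i ^+ 2)); last first.
  by move=> i _; rewrite mxE /a /b; ring.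
rewrite !big_split /= -mulr_sumr.
set A := \sum_i a i ^+ 2; set Bs := \sum_i b i ^+ 2; set D := \sum_i a i * b i.
have A0 : 0 <= A by apply: sumr_ge0 => i _; exact: sqr_ge0.
have B0 : 0 <= Bs by apply: sumr_ge0 => i _; exact: sqr_ge0.
have hD : D <= Num.sqrt A * Num.sqrt Bs.
  rewrite -sqrtrM // (le_trans (ler_norm D)) // -sqrtr_sqr ler_sqrt ?mulr_ge0 //.
  exact: cs_ineq.
have sA := sqrtr_ge0 A; have sB := sqrtr_ge0 Bs.
rewrite -[X in _ <= X]ger0_norm ?addr_ge0 // -sqrtr_sqr ler_sqrt ?sqr_ge0 //.
rewrite sqrrD !sqr_sqrtr //. 
lra.
Qed.

Arguments enormD {R n}.

Lemma phiS (R : realType) (Sig : finType) n m (A : Sig -> 'M[R]_n) (B : Sig -> 'M[R]_(n, m))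
  Psi sigma x0 k :
  phi A B k.+1 sigma x0 Psi = A (sigma k) *m phi A B k sigma x0 Psi +
     B (sigma k) *m Psi (hist_of sigma k (trajs A B Psi sigma x0 k)).
Proof. by []. Qed.

Lemma phi0 (R : realType) (Sig : finType) n m (A : Sig -> 'M[R]_n) (B : Sig -> 'M[R]_(n, m))
  Psi sigma x0 : phi A B 0 sigma x0 Psi = x0.
Proof. by []. Qed.

Lemma hist_ext (R : realType) (Sig : finType) n (s1 s2 : nat -> Sig) k (s : seq 'cV[R]_n) :
  (forall j, (j < k)%N -> s1 j = s2 j) -> hist_of s1 k s = hist_of s2 k s.
Proof.
move=> H; rewrite /hist_of; congr existT; congr pair.
by apply: funext => j; apply: H.
Qed.

Lemma trajs_ext (R : realType) (Sig : finType) n m (A : Sig -> 'M[R]_n) (B : Sig -> 'M[R]_(n, m))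
  Psi (s1 s2 : nat -> Sig) x0 k :
  (forall j, (j < k)%N -> s1 j = s2 j) -> trajs A B Psi s1 x0 k = trajs A B Psi s2 x0 k.
Proof.
elim: k => [//|k IH] H /=.
rewrite IH; last by move=> j jk; apply: H; exact: ltnW.
rewrite (@hist_ext _ _ _ s1 s2); last by move=> j jk; apply: H; exact: ltnW.
by rewrite H.
Qed.

Definition ext (Sig : finType) (s0 : Sig) k (md : 'I_k -> Sig) : nat -> Sig :=
  fun j => match (insub j : option 'I_k) with Some o => md o | None => s0 end.

Arguments ext {Sig} s0 {k}.

Lemma extE (Sig : finType) (s0 : Sig) k (sigma : nat -> Sig) j : (j < k)%N ->
  ext s0 (fun o : 'I_k => sigma (nat_of_ord o)) j = sigma j.
Proof. by move=> jk; rewrite /ext insubT. Qed.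

Definition comb (R : realType) (Sig : finType) n m (A : Sig -> 'M[R]_n) (B : Sig -> 'M[R]_(n, m))
  (s0 : Sig) (a1 a2 : R) (Psi1 Psi2 : controller R Sig n m) (x1 x2 : 'cV[R]_n) :
  controller R Sig n m :=
  fun h => match h with existT k (_, md) =>
    let sg := ext s0 md in
    a1 *: Psi1 (hist_of sg k (trajs A B Psi1 sg x1 k)) +
    a2 *: Psi2 (hist_of sg k (trajs A B Psi2 sg x2 k)) end.

Arguments comb {R Sig n m}.

Lemma comb_phi (R : realType) (Sig : finType) n m (A : Sig -> 'M[R]_n) (B : Sig -> 'M[R]_(n, m))
  (s0 : Sig) (a1 a2 : R) (Psi1 Psi2 : controller R Sig n m) (x1 x2 : 'cV[R]_n) sigma k :
  phi A B k sigma (a1 *: x1 + a2 *: x2) (comb A B s0 a1 a2 Psi1 Psi2 x1 x2) =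
  a1 *: phi A B k sigma x1 Psi1 + a2 *: phi A B k sigma x2 Psi2.
Proof.
elim: k => [//|k IH].
rewrite !phiS IH.
have Hs : forall j, (j < k)%N -> ext s0 (fun o : 'I_k => sigma (nat_of_ord o)) j = sigma j.
  by move=> j jk; exact: extE.
rewrite [comb _ _ _ _ _ _ _ _ _ _]/comb /=.
rewrite (@trajs_ext _ _ _ _ A B Psi1 _ _ x1 k Hs) (@trajs_ext _ _ _ _ A B Psi2 _ _ x2 k Hs).
rewrite !(@hist_ext _ _ _ _ sigma k _ Hs).
rewrite !mulmxDr -!scalemxAr !scalerDr.
rewrite -!addrA; congr (_ + _); rewrite addrCA; congr (_ + _); by rewrite addrC.
Qed.

Lemma norm_le_mx (R : realType) n (z : 'cV[R]_n) : (enorm z <= Num.sqrt n%:R * `|z|)%R.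
Proof.
rewrite /enorm -[X in _ <= _ * X]ger0_norm // -sqrtr_sqr -sqrtrM // ler_sqrt; last first.
  by rewrite mulr_ge0 ?sqr_ge0.
have H : forall i : 'I_n, z i 0 ^+ 2 <= `|z| ^+ 2.
  move=> i; rewrite -real_normK ?num_real // lerXn2r ?nnegrE //.
  rewrite [X in _ <= X]mx_normrE.
  exact: (le_bigmax _ (fun ij => `|z ij.1 ij.2|) (i, 0)).
apply: le_trans (ler_sum _ (fun i _ => H i)) _.
by rewrite sumr_const card_ord mulr_natl.
Qed.

Lemma lip_cont (R : realType) n (f : 'cV[R]_n -> R) (K : R) : 0 <= K ->
  (forall x y, `|f x - f y| <= K * `|x - y|) -> continuous f.
Proof.
move=> K0 Lip x.
apply/(@cvgrPdist_lt _ _ _ _ (nbhs_filter x)) => e e0.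
set d := e / (K + 1).
have d0 : 0 < d by rewrite divr_gt0 // ltr_wpDl.
have := (@near_ball _ _ x d d0); apply: filterS => y; rewrite -ball_normE /= => hxy.
apply: le_lt_trans (Lip x y) _.
apply: le_lt_trans (_ : _ <= (K + 1) * `|x - y|) _.
  by rewrite ler_wpM2r ?normr_ge0 ?lerDl.
by rewrite -ltr_pdivlMl ?ltr_wpDl // mulrC.
Qed.

Local Open Scope ereal_scope.

Lemma cost_ge (R : realType) (Sig : finType) n m (A : Sig -> 'M[R]_n) (B : Sig -> 'M[R]_(n, m))
  x0 Psi sigma : (enorm x0)%:E <= cost A B x0 Psi sigma.
Proof.
rewrite /cost.
apply: le_trans (nneseries_lim_ge 1 _); last by move=> i _ _; rewrite lee_fin enorm_ge0.
by rewrite big_nat1 phi0.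
Qed.

Lemma geo_sum (R : realType) (g : R) N :
  ((1 - g) * \sum_(0 <= i < N) g ^+ i = 1 - g ^+ N)%R.
Proof.
elim: N => [|N IH]; first by rewrite big_geq // mulr0 expr0 subrr.
by rewrite big_nat_recr //= mulrDr IH exprS; ring.
Qed.

Lemma series_le (R : realType) (u : nat -> R) (b : R) :
  (forall i, 0 <= u i)%R -> (forall N, \sum_(0 <= i < N) u i <= b)%R ->
  \sum_(0 <= i <oo) (u i)%:E <= b%:E.
Proof.
move=> u0 ub.
apply: lime_le.
  by apply: is_cvg_nneseries => i _ _; rewrite lee_fin.
apply: nearW => N; by rewrite sumEFin lee_fin.
Qed.

Lemma cost_geo (R : realType) (Sig : finType) n m (A : Sig -> 'M[R]_n) (B : Sig -> 'M[R]_(n, m))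
  Psi (C g : R) x0 sigma : (0 <= g)%R -> (g < 1)%R ->
  (forall k, enorm (phi A B k sigma x0 Psi) <= C * g ^+ k * enorm x0)%R ->
  cost A B x0 Psi sigma <= (C / (1 - g) * enorm x0)%:E.
Proof.
move=> g0 g1 H; apply: series_le => [i|N]; first exact: enorm_ge0.
have g1p : (0 < 1 - g)%R by rewrite subr_gt0.
have Cx : (0 <= C * enorm x0)%R.
  by have := le_trans (enorm_ge0 _) (H 0%N); rewrite expr0 mulr1.
apply: (le_trans (ler_sum _ (fun i _ => H i))).
rewrite (eq_bigr (fun i => (C * enorm x0) * g ^+ i)%R); last by move=> i _; ring.
rewrite -mulr_sumr.
rewrite [X in (_ <= X)%R](_ : _ = (C * enorm x0) * (1 - g)^-1)%R; last by field; rewrite gt_eqF.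
apply: ler_wpM2l => //.
rewrite -(ler_pM2l g1p) geo_sum mulfV ?gt_eqF //.
by rewrite lerBlDr lerDl exprn_ge0.
Qed.

Lemma cost_comb (R : realType) (Sig : finType) n m (A : Sig -> 'M[R]_n) (B : Sig -> 'M[R]_(n, m))
  (s0 : Sig) (a1 a2 : R) (Psi1 Psi2 : controller R Sig n m) (x1 x2 : 'cV[R]_n) sigma (b1 b2 : R) :
  cost A B x1 Psi1 sigma <= b1%:E -> cost A B x2 Psi2 sigma <= b2%:E ->
  cost A B (a1 *: x1 + a2 *: x2) (comb A B s0 a1 a2 Psi1 Psi2 x1 x2) sigma
    <= (`|a1| * b1 + `|a2| * b2)%:E.
Proof.
move=> h1 h2; rewrite /cost.
apply: le_trans.
  apply: (@lee_nneseries _ _ (fun k => (`|a1|%:E * (enorm (phi A B k sigma x1 Psi1))%:E) +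
     (`|a2|%:E * (enorm (phi A B k sigma x2 Psi2))%:E))) => [i _ _|i _].
    by rewrite lee_fin enorm_ge0.
  by rewrite comb_phi -!EFinM -EFinD lee_fin -!enormZ enormD.
rewrite nneseriesD; first last.
- by move=> i _ _; rewrite -EFinM lee_fin mulr_ge0 ?enorm_ge0.
- by move=> i _ _; rewrite -EFinM lee_fin mulr_ge0 ?enorm_ge0.
rewrite !nneseriesZl; try by move=> i _; rewrite lee_fin enorm_ge0.
rewrite EFinD !EFinM; apply: leeD; apply: lee_wpmul2l => //; by rewrite lee_fin.
Qed.

Arguments cost_comb {R Sig n m A B} s0 {a1 a2 Psi1 Psi2 x1 x2 sigma b1 b2}.

Lemma Vext_le (R : realType) (Sig : finType) n m (A : Sig -> 'M[R]_n) (B : Sig -> 'M[R]_(n, m))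
  x0 (Psi : controller R Sig n m) b :
  (forall sigma, cost A B x0 Psi sigma <= b%:E) -> Vext A B x0 <= b%:E.
Proof.
move=> H; apply: ge_ereal_inf; exists (ereal_sup (range (cost A B x0 Psi))).
  by exists Psi.
by apply: ge_ereal_sup => _ [s _ <-]; exact: H.
Qed.

Lemma Vext_ge (R : realType) (Sig : finType) n m (A : Sig -> 'M[R]_n) (B : Sig -> 'M[R]_(n, m))
  (s0 : Sig) x0 : (enorm x0)%:E <= Vext A B x0.
Proof.
apply: le_ereal_inf_tmp => _ [Psi _ <-].
apply: le_ereal_sup_tmp; exists (cost A B x0 Psi (fun=> s0)); first by exists (fun=> s0).
exact: cost_ge.
Qed.


Local Close Scope ereal_scope.

Theorem mainTheorem3 (R : realType) (Sig : finType) (n m : nat)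
  (A : Sig -> 'M[R]_n) (B : Sig -> 'M[R]_(n, m))
  (Psi : controller R Sig n m) (C gamma : R) :
  (0 < #|Sig|)%N -> 1 < C -> 0 <= gamma -> gamma < 1 ->
  (forall (x0 : 'cV[R]_n) (sigma : nat -> Sig) (k : nat),
      enorm (phi A B k sigma x0 Psi) <= C * gamma ^+ k * enorm x0) ->
  (forall x0 : 'cV[R]_n,
      ((enorm x0)%:E <= Vext A B x0)%E /\
      (Vext A B x0 <= (C / (1 - gamma) * enorm x0)%:E)%E) /\
  V A B 0 = 0 /\
  (forall x : 'cV[R]_n, x != 0 -> 0 < V A B x) /\
  (forall (l : R) (x : 'cV[R]_n), V A B (l *: x) = `|l| * V A B x) /\
  (forall x y : 'cV[R]_n, V A B (x + y) <= V A B x + V A B y) /\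
  (forall (x y : 'cV[R]_n) (t : R), 0 <= t -> t <= 1 ->
      V A B (t *: x + (1 - t) *: y) <= t * V A B x + (1 - t) * V A B y) /\
  continuous (V A B).
Proof.
move=> Sig0 C1 g0 g1 HPsi.
case/card_gt0P: Sig0 => s0 _.
have bounds : forall x0 : 'cV[R]_n, ((enorm x0)%:E <= Vext A B x0)%E /\
      (Vext A B x0 <= (C / (1 - gamma) * enorm x0)%:E)%E.
  move=> x0; split; first exact: Vext_ge s0 x0.
  by apply: (@Vext_le _ _ _ _ A B x0 Psi) => s; apply: cost_geo.
set K := C / (1 - gamma).
have K0 : 0 <= K by rewrite /K divr_ge0 // ?subr_ge0 ?ltW // (lt_trans ltr01 C1).
have VE : forall x0, Vext A B x0 = (V A B x0)%:E.
  move=> x0; rewrite /V; case: (bounds x0); by case: (Vext A B x0).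
have Vge : forall x, enorm x <= V A B x.
  by move=> x; case: (bounds x); rewrite VE lee_fin.
have Vle : forall x, V A B x <= K * enorm x.
  by move=> x; case: (bounds x); rewrite VE lee_fin.
have approx : forall x e, 0 < e -> exists Psi' : controller R Sig n m,
    forall s, (cost A B x Psi' s <= (V A B x + e)%:E)%E.
  move=> x e e0; have : (Vext A B x < (V A B x + e)%:E)%E by rewrite VE lte_fin ltrDl.
  case/ereal_inf_lt => _ [Psi' _ <-] hlt; exists Psi' => s.
  apply: le_trans (ltW hlt); apply: ereal_sup_ubound; by exists s.
have combV : forall a1 a2 x1 x2,
    V A B (a1 *: x1 + a2 *: x2) <= `|a1| * V A B x1 + `|a2| * V A B x2.
  move=> a1 a2 x1 x2; apply/ler_addgt0Pr => e e0.
  set c := `|a1| + `|a2|.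
  have c0 : 0 <= c by rewrite addr_ge0.
  have c1 : 0 < c + 1 by rewrite ltr_wpDl.
  set e' := e / (c + 1).
  have e'0 : 0 < e' by rewrite divr_gt0.
  have ce : c * e' <= e.
    by rewrite /e' mulrA ler_pdivrMr // mulrDr mulr1 mulrC lerDl ltW.
  have [P1 h1] := approx x1 e' e'0; have [P2 h2] := approx x2 e' e'0.
  have := @Vext_le _ _ _ _ A B _ (comb A B s0 a1 a2 P1 P2 x1 x2) _
    (fun s => cost_comb s0 (h1 s) (h2 s)).
  rewrite VE lee_fin => h.
  have -> : `|a1| * V A B x1 + `|a2| * V A B x2 + e =
     (`|a1| * (V A B x1 + e') + `|a2| * (V A B x2 + e')) + (e - c * e').
    rewrite /c; generalize `|a1| `|a2| (V A B x1) (V A B x2) e e'.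
    by move=> *; ring.
  apply: le_trans h _; rewrite lerDl subr_ge0 //.
have Vsub : forall x y, V A B (x + y) <= V A B x + V A B y.
  by move=> x y; have := combV 1 1 x y; rewrite !scale1r normr1 !mul1r.
have VZle : forall l x, V A B (l *: x) <= `|l| * V A B x.
  by move=> l x; have := combV l 0 x x; rewrite scale0r addr0 normr0 mul0r addr0.
have V0 : V A B 0 = 0.
  apply/le_anti/andP; split.
    by have := VZle 0 0; rewrite scale0r normr0 mul0r.
  by have := Vge 0; rewrite enorm0.
have VZ : forall l x, V A B (l *: x) = `|l| * V A B x.
  move=> l x; have [->|l0] := eqVneq l 0; first by rewrite scale0r normr0 mul0r V0.
  apply/le_anti/andP; split; first exact: VZle.
  have := VZle l^-1 (l *: x); rewrite scalerA mulVf // scale1r normfV => h.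
  apply: le_trans (ler_wpM2l (normr_ge0 l) h) _.
  by rewrite mulrA mulfV ?normr_eq0 // mul1r.
split; first exact: bounds.
split; first exact: V0.
split.
  by move=> x x0; apply: lt_le_trans (Vge x); exact: enorm_gt0.
split; first exact: VZ.
split; first exact: Vsub.
split.
  move=> x y t t0 t1; apply: le_trans (Vsub _ _) _.
  by rewrite !VZ !ger0_norm ?subr_ge0.
have Lip : forall x y, `|V A B x - V A B y| <= K * enorm (x - y).
  move=> x y; rewrite ler_norml; apply/andP; split.
    have e1 : enorm (y - x) = enorm (x - y).
      by rewrite -opprB -scaleN1r enormZ normrN normr1 mul1r.
    have := Vle (y - x); rewrite e1 => h2.
    have := Vsub x (y - x); rewrite addrC subrK => h3.
    move: h2 h3; generalize (V A B x) (V A B y) (V A B (y - x)) (K * enorm (x - y)).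
    by move=> a b c d h2 h3; lra.
  have := Vsub y (x - y); rewrite addrC subrK => h1.
  have := Vle (x - y) => h2.
  move: h1 h2; generalize (V A B x) (V A B y) (V A B (x - y)) (K * enorm (x - y)).
  by move=> a b c d h1 h2; lra.
have sn := sqrtr_ge0 (n%:R : R).
have Ks : 0 <= K * Num.sqrt n%:R by rewrite mulr_ge0.
apply: (@lip_cont _ _ _ _ Ks) => x y; apply: le_trans (Lip x y) _.
by rewrite -mulrA ler_wpM2l // norm_le_mx.
Qed.
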